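(* For the operator $A\colon c_c\to c_c$, $(Ax)_1=x_1$, $(Ax)_n=x_n-x_{n-1}$ ($n>1$), the point $x=0$ minimizes $f\circ A$ over $c_c$, and $\min_{x\in c_c} f(Ax)=f(0)=\pi^2/12$. Moreover, the directional derivative of $f\circ A$ at $0$ vanishes in every direction $y\in c_c$.
   Context: Let $c_c$ be the space of finitely supported real sequences with the $\ell^2$-norm. Let $f\colon c_c\to\mathbb{R}$, $f(x)=\sum_{n=1}^\infty \frac{n^2}{2}(x_n-n^{-2})^2$. *)

(* Defs.v *)
From Stdlib Require Import Reals.
From Coquelicot Require Import Coquelicot.
Open Scope R_scope.

(* Real sequences x_1, x_2, ... are encoded as  x : nat -> R  with
   x k standing for x_{k+1} (index shift by one). *)

Definition cc (x : nat -> R) : Prop :=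
  exists N : nat, forall k : nat, (N <= k)%nat -> x k = 0.

Definition f_term (x : nat -> R) (k : nat) : R :=
  (INR (k + 1)) ^ 2 / 2 * (x k - / (INR (k + 1)) ^ 2) ^ 2.

Definition fobj (x : nat -> R) : R := Series (f_term x).

Definition opA (x : nat -> R) : nat -> R :=
  fun k => match k with
           | O => x O
           | S j => x (S j) - x j
           end.

Definition zero_seq : nat -> R := fun _ => 0.

(* Main.v *)
Require Import Defs.
From Stdlib Require Import Reals.
From Coquelicot Require Import Coquelicot.
From Stdlib Require Import Lra Psatz Nsatz.
Open Scope R_scope.

Lemma FTC (F f : R -> R) a b : (forall x, is_derive F x (f x)) ->
  (forall x, ex_derive f x) -> is_RInt f a b (F b - F a).
Proof. intros H1 H2. apply (is_RInt_derive F f a b).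
- intros x _; apply H1.
- intros x _; apply (@ex_derive_continuous R_AbsRing R_NormedModule), H2. Qed.

Lemma lin2 (f g : R -> R) a b (A B p q : R) : is_RInt f a b A -> is_RInt g a b B ->
  @is_RInt R_NormedModule (fun x => p * f x + q * g x) a b (p*A + q*B).
Proof. intros Hf Hg. exact (is_RInt_plus _ _ _ _ _ _ (is_RInt_scal _ _ _ p _ Hf) (is_RInt_scal _ _ _ q _ Hg)). Qed.

Lemma uniq (f : R -> R) a b (l1 l2 : R) : is_RInt f a b l1 -> is_RInt f a b l2 -> l1 = l2.
Proof. intros H1 H2. rewrite <- (is_RInt_unique _ _ _ _ H1). apply is_RInt_unique; auto. Qed.

Definition Ii n : R := RInt (fun x => cos x ^ (2*n)) 0 (PI/2).
Definition Jj n : R := RInt (fun x => x^2 * cos x ^ (2*n)) 0 (PI/2).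

Lemma isI n : is_RInt (fun x => cos x ^ (2*n)) 0 (PI/2) (Ii n).
Proof. unfold Ii, Jj. apply (@RInt_correct R_CompleteNormedModule), (@ex_RInt_continuous R_CompleteNormedModule). intros z _.
apply (@ex_derive_continuous R_AbsRing R_NormedModule). auto_derive. easy. Qed.
Lemma isJ n : is_RInt (fun x => x^2 * cos x ^ (2*n)) 0 (PI/2) (Jj n).
Proof. unfold Ii, Jj. apply (@RInt_correct R_CompleteNormedModule), (@ex_RInt_continuous R_CompleteNormedModule). intros z _.
apply (@ex_derive_continuous R_AbsRing R_NormedModule). auto_derive. easy. Qed.

Lemma dH m x : is_derive (fun x => sin x * cos x ^ (S m)) x
  ((INR m + 2) * cos x ^ (S (S m)) - (INR m + 1) * cos x ^ m).
Proof. auto_derive; [easy|]. cbn [pred].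
change (match m with 0%nat => 1 | S _ => INR m + 1 end) with (INR (S m)). rewrite S_INR.
pose proof (sin2_cos2 x). unfold Rsqr in *. simpl. nsatz. Qed.

Lemma dG m a x : INR m + 2 = 2 * a ->
  is_derive (fun x => x * cos x ^ (S (S m)) + a * (x^2 * sin x * cos x ^ (S m))) x
  (cos x ^ (S (S m)) - a * (INR m + 1) * (x^2 * cos x ^ m) + 2 * a^2 * (x^2 * cos x ^ (S (S m)))).
Proof. intros Hm. auto_derive; [easy|]. cbn [pred].
change (match m with 0%nat => 1 | S _ => INR m + 1 end) with (INR (S m)).
change (match S m with 0%nat => 1 | S _ => INR (S m) + 1 end) with (INR (S (S m))).
rewrite !S_INR.
pose proof (sin2_cos2 x). unfold Rsqr in *. simpl. nsatz. Qed.

Lemma cos_pi2_pow k : cos (PI/2) ^ (S k) = 0.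
Proof. rewrite cos_PI2. simpl. ring. Qed.

Lemma R1 n : (2 * INR n + 2) * Ii (S n) = (2 * INR n + 1) * Ii n.
Proof.
assert (A := FTC _ _ 0 (PI/2) (dH (2*n)) (fun x => ltac:(auto_derive; easy))).
assert (B := lin2 _ _ _ _ _ _ (INR (2*n) + 2) (- (INR (2*n) + 1)) (isI (S n)) (isI n)).
cbv beta in A. rewrite cos_pi2_pow, sin_0 in A.
replace (2 * S n)%nat with (S (S (2 * n))) in B by lia.
assert (B' : is_RInt (fun x => (INR (2*n)+2)*cos x^(S(S(2*n))) - (INR(2*n)+1)*cos x^(2*n)) 0 (PI/2) ((INR (2*n) + 2) * Ii (S n) + - (INR (2*n) + 1) * Ii n)).
{ refine (is_RInt_ext _ _ _ _ _ _ B). intros; cbn -[pow INR]. ring. }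
assert (E := uniq _ _ _ _ _ A B').
rewrite mult_INR in E. simpl INR in E. lra. Qed.

Lemma R2 n : Ii (S n) = (INR n + 1) * (2 * INR n + 1) * Jj n - 2 * (INR n + 1)^2 * Jj (S n).
Proof.
assert (Hm : INR (2*n) + 2 = 2 * (INR n + 1)) by (rewrite mult_INR; simpl; ring).
assert (A := FTC _ _ 0 (PI/2) (fun x => dG (2*n) (INR n + 1) x Hm) (fun x => ltac:(auto_derive; easy))).
cbv beta in A. rewrite !cos_pi2_pow, sin_0 in A.
assert (B1 := lin2 _ _ _ _ _ _ 1 (- ((INR n + 1) * (INR (2*n) + 1))) (isI (S n)) (isJ n)).
assert (B := lin2 _ _ _ _ _ _ 1 (2 * (INR n + 1)^2) B1 (isJ (S n))).
replace (2 * S n)%nat with (S (S (2 * n))) in B by lia.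
assert (B' : is_RInt (fun x => cos x ^ S (S (2 * n)) - (INR n + 1) * (INR (2 * n) + 1) * (x ^ 2 * cos x ^ (2 * n)) +
       2 * (INR n + 1) ^ 2 * (x ^ 2 * cos x ^ S (S (2 * n)))) 0 (PI/2)
   (1 * (1 * Ii (S n) + - ((INR n + 1) * (INR (2 * n) + 1)) * Jj n) + 2 * (INR n + 1) ^ 2 * Jj (S n))).
{ refine (is_RInt_ext _ _ _ _ _ _ B). intros; cbn -[pow INR]. ring. }
assert (E := uniq _ _ _ _ _ A B').
rewrite mult_INR in E. simpl INR in E. lra. Qed.

Lemma I0 : Ii 0 = PI/2.
Proof.
assert (A := FTC (fun x => x) (fun _ => 1) 0 (PI/2) (fun x => ltac:(auto_derive; easy)) (fun x => ltac:(auto_derive; easy))).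
assert (E := uniq _ _ _ _ _ A (isI 0)). lra. Qed.

Lemma J0 : Jj 0 = (PI/2)^3/3.
Proof.
assert (D : forall x : R, is_derive (fun x : R => x^3/3) x (x^2 * cos x ^ (2*0))).
{ intros x. auto_derive; [easy|]. simpl. field. }
assert (A := FTC (fun x => x^3/3) (fun x => x^2 * cos x ^ (2*0)) 0 (PI/2) D (fun x => ltac:(auto_derive; easy))).
assert (E := uniq _ _ _ _ _ A (isJ 0)). cbv beta in E. lra. Qed.

Lemma Ipos n : 0 < Ii n.
Proof. induction n. rewrite I0. pose proof PI_RGT_0. lra.
pose proof (R1 n). pose proof (pos_INR n).
replace (Ii (S n)) with ((2 * INR n + 1) * Ii n / (2 * INR n + 2)) by (rewrite <- H; field; lra).
apply Rdiv_lt_0_compat; nra. Qed.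

Lemma Jpos n : 0 <= Jj n.
Proof. apply (is_RInt_ge_0 _ 0 (PI/2) _ ltac:(pose proof PI_RGT_0; lra) (isJ n)).
intros x _. apply Rmult_le_pos. nra. rewrite pow_mult. apply pow_le. nra. Qed.

Lemma sinb x : 0 <= x <= 2 -> x / 3 <= sin x.
Proof. intros Hx.
assert (H := SIN x (proj1 Hx) ltac:(pose proof PI2_3_2; lra)).
destruct H as [H _].
replace (sin_lb x) with (x - x^3/6 + x^5/120 - x^7/5040) in H.
2:{ unfold sin_lb, sin_approx, sin_term. cbn [sum_f_R0].
    replace (INR (Factorial.fact (2*0+1))) with 1 by (simpl; ring).
    replace (INR (Factorial.fact (2*1+1))) with 6 by (simpl; ring).
    replace (INR (Factorial.fact (2*2+1))) with 120 by (simpl; ring).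
    replace (INR (Factorial.fact (2*3+1))) with 5040 by (simpl; ring).
    simpl. field. }
eapply Rle_trans; [|exact H].
replace (x - x^3/6 + x^5/120 - x^7/5040) with (x * (1 - (x^2)/6 + (x^2)^2/120 - (x^2)^3/5040)) by field.
assert (Hu: 0 <= x^2 <= 4) by nra. revert Hu. generalize (x^2). intros u Hu.
assert (u^3 <= 4 * u^2) by nra.
assert (1/3 <= 1 - u/6 + u^2/120 - u^3/5040) by nra.
nra. Qed.

Lemma Jbound n : Jj n <= 9 * (Ii n - Ii (S n)).
Proof.
assert (B := lin2 _ _ _ _ _ _ 9 (-9) (isI n) (isI (S n))).
replace (9 * (Ii n - Ii (S n))) with (9 * Ii n + -9 * Ii (S n)) by ring.
rewrite <- (is_RInt_unique _ _ _ _ B). unfold Jj.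
pose proof PI_RGT_0. pose proof PI_4.
apply RInt_le. lra. exists (Jj n). apply isJ. eexists. exact B.
intros x Hx. replace (2 * S n)%nat with (S (S (2 * n))) by lia.
assert (HC : 0 <= cos x ^ (2*n)) by (rewrite pow_mult; apply pow_le; nra).
assert (Hs := sinb x ltac:(lra)).
pose proof (sin2_cos2 x). unfold Rsqr in *.
replace (cos x ^ S (S (2*n))) with (cos x^2 * cos x^(2*n)) by (simpl; ring).
assert (H3 : x^2 <= 9 * (sin x * sin x)) by nra.
generalize dependent (cos x ^ (2*n)). intros C HC.
assert (0 <= C * (9 * (sin x * sin x) - x^2)) by (apply Rmult_le_pos; lra). nra. Qed.

Definition rr n := Jj n / Ii n.

Lemma step n : / (INR n + 1)^2 = 2 * (rr n - rr (S n)).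
Proof. unfold rr. pose proof (R1 n). pose proof (R2 n). pose proof (Ipos n). pose proof (Ipos (S n)).
pose proof (pos_INR n).
replace (Ii n) with ((2 * INR n + 2) * Ii (S n) / (2 * INR n + 1)) by (rewrite H; field; lra).
replace (Jj (S n)) with (((INR n + 1) * (2 * INR n + 1) * Jj n - Ii (S n)) / (2 * (INR n + 1)^2)) by (rewrite H0; field; lra).
field. all: repeat split; try lra; nra. Qed.

Lemma partial N : sum_n (fun k => / (INR k + 1)^2) N = 2 * (rr 0 - rr (S N)).
Proof. induction N. rewrite sum_O. apply step.
rewrite sum_Sn, IHN. rewrite (step (S N)). cbn. ring. Qed.

Lemma rr_lim : is_lim_seq rr 0.
Proof.
apply is_lim_seq_le_le with (u := fun _ => 0) (w := fun n => 9 / 2 * / INR (S n)).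
- intros n. unfold rr. pose proof (Ipos n). pose proof (Jpos n). pose proof (Jbound n).
  pose proof (R1 n). pose proof (pos_INR n). split. apply Rdiv_le_0_compat; lra.
  rewrite S_INR. apply (Rmult_le_reg_r (Ii n)); auto.
  replace (Jj n / Ii n * Ii n) with (Jj n) by (field; lra).
  replace (9 / 2 * / (INR n + 1) * Ii n) with (9 * (Ii n - Ii (S n))); [lra|].
  replace (Ii (S n)) with ((2 * INR n + 1) * Ii n / (2 * INR n + 2)) by (rewrite <- H2; field; lra).
  field. lra.
- apply is_lim_seq_const.
- replace (Finite 0) with (Rbar_mult (9/2) 0) by (simpl; f_equal; ring).
  apply is_lim_seq_scal_l.
  apply -> (is_lim_seq_incr_1 (fun n => / INR n)).
  replace (Finite 0) with (Rbar_inv p_infty) by reflexivity.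
  apply is_lim_seq_inv. apply is_lim_seq_INR. discriminate.
Qed.

Lemma basel : is_series (fun k => / (INR k + 1)^2) (PI^2/6).
Proof.
assert (H : is_lim_seq (fun N => 2 * (rr 0 - rr (S N))) (2 * (rr 0 - 0))).
{ apply (is_lim_seq_scal_l _ 2 (Finite (rr 0 - 0))). apply is_lim_seq_minus'. apply is_lim_seq_const.
  apply -> (is_lim_seq_incr_1 rr). apply rr_lim. }
replace (PI^2/6) with (2 * (rr 0 - 0)).
2:{ unfold rr. rewrite I0, J0. pose proof PI_RGT_0. field. lra. }
apply (is_lim_seq_ext _ _ _ (fun N => eq_sym (partial N))) in H. exact H. Qed.

Ltac req := match goal with |- ?a = ?b => change (@eq R a b) end.

Lemma sumRS (a : nat -> R) N : sum_n a (S N) = sum_n a N + a (S N).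
Proof. rewrite sum_Sn. reflexivity. Qed.

Lemma fin_series (a : nat -> R) N : (forall k, (N <= k)%nat -> a k = 0) -> is_series a (sum_n a N).
Proof. intros H. unfold is_series.
apply (filterlim_ext_loc (fun _ => sum_n a N)).
- exists N. intros n Hn. cbv beta. induction Hn. reflexivity. rewrite sumRS, (H (S m)) by lia. rewrite Rplus_0_r. exact IHHn.
- apply filterlim_const. Qed.

Lemma sum_lin (u v : nat -> R) c d N : sum_n (fun k => c * u k + d * v k) N = c * sum_n u N + d * sum_n v N.
Proof. induction N. rewrite !sum_O. req. ring. rewrite !sumRS, IHN. req. ring. Qed.

Lemma sum0 N : sum_n (fun _ => 0) N = 0.
Proof. induction N. rewrite sum_O. reflexivity. rewrite sumRS, IHN. req. ring. Qed.

Lemma sum_nonneg (u : nat -> R) N : (forall k, 0 <= u k) -> 0 <= sum_n u N.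
Proof. intros H. induction N. rewrite sum_O; auto. rewrite sumRS. specialize (H (S N)). lra. Qed.

Lemma tele x N : sum_n (opA x) N = x N.
Proof. induction N. rewrite sum_O. reflexivity. rewrite sumRS, IHN. simpl. req. ring. Qed.

Lemma fterm_split z k : f_term z k = / (INR k + 1)^2 / 2 + ((INR k + 1)^2 / 2 * z k ^ 2 + (-1) * z k).
Proof. unfold f_term. rewrite plus_INR. simpl (INR 1). pose proof (pos_INR k). field. lra. Qed.

Lemma S0 : is_series (fun k => / (INR k + 1)^2 / 2) (PI^2/12).
Proof. replace (PI^2/12) with (/2 * (PI^2/6)) by field.
apply (is_series_ext (fun k => /2 * (/ (INR k + 1)^2))).
- intros n. req. pose proof (pos_INR n). field. lra.
- exact (@is_series_scal_l _ R_NormedModule (/2) _ _ basel). Qed.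

Lemma fobj_fin z N : (forall k, (N <= k)%nat -> z k = 0) ->
  is_series (f_term z) (PI^2/12 + (sum_n (fun k => (INR k + 1)^2/2 * z k ^ 2) N - sum_n z N)).
Proof. intros H.
apply (is_series_ext (fun k => / (INR k + 1)^2 / 2 + ((INR k + 1)^2 / 2 * z k ^ 2 + (-1) * z k))).
{ intros; symmetry; apply fterm_split. }
apply (is_series_plus _ _ _ _ S0).
replace (sum_n (fun k => (INR k + 1)^2/2 * z k ^ 2) N - sum_n z N) with
  (sum_n (fun k => (INR k + 1)^2/2 * z k ^ 2 + (-1) * z k) N).
2:{ rewrite (sum_n_ext (fun k => (INR k + 1)^2/2 * z k ^ 2 + (-1) * z k) (fun k => 1 * ((INR k + 1)^2/2 * z k ^ 2) + (-1) * z k)) by (intros; req; ring).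
    rewrite sum_lin. req. ring. }
apply fin_series. intros k Hk. rewrite H by auto. ring. Qed.

Lemma opA_supp x N : (forall k, (N <= k)%nat -> x k = 0) -> forall k, (S N <= k)%nat -> opA x k = 0.
Proof. intros H k Hk. destruct k. lia. simpl. rewrite !H by lia. ring. Qed.

Lemma fobjA x N : (forall k, (N <= k)%nat -> x k = 0) ->
  fobj (opA x) = PI^2/12 + sum_n (fun k => (INR k + 1)^2/2 * opA x k ^ 2) (S N).
Proof. intros H. unfold fobj. rewrite (is_series_unique _ _ (fobj_fin _ _ (opA_supp x N H))).
rewrite tele, H by lia. ring. Qed.

Theorem mainTheorem10 :
  (forall x, cc x -> cc (opA x)) /\
  (forall x, cc x -> ex_series (f_term x)) /\
  (forall x, cc x -> fobj (opA zero_seq) <= fobj (opA x)) /\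
  fobj (opA zero_seq) = fobj zero_seq /\
  fobj zero_seq = PI ^ 2 / 12 /\
  (forall y, cc y ->
     filterlim (fun t => (fobj (opA (fun k => t * y k)) - fobj (opA zero_seq)) / t)
               (at_right 0) (locally 0)).
Proof.
assert (Z : forall k, (0 <= k)%nat -> zero_seq k = 0) by reflexivity.
assert (F0 : fobj (opA zero_seq) = PI^2/12).
{ rewrite (fobjA _ 0 Z). rewrite (sum_n_ext _ (fun _ => 0)).
  - rewrite sum0. req. ring.
  - intros k. destruct k; unfold zero_seq; simpl; req; ring. }
split; [|split; [|split; [|split; [|split]]]].
- intros x [N H]. exists (S N). apply opA_supp; auto.
- intros x [N H]. eexists. apply (fobj_fin x N H).
- intros x [N H]. rewrite F0, (fobjA x N H).
  assert (0 <= sum_n (fun k => (INR k + 1) ^ 2 / 2 * opA x k ^ 2) (S N)).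
  { apply sum_nonneg. intros k. pose proof (pos_INR k). apply Rmult_le_pos. apply Rmult_le_pos; [nra|lra]. nra. }
  lra.
- rewrite F0. unfold fobj. symmetry. apply is_series_unique.
  apply (is_series_ext (fun k => / (INR k + 1)^2 / 2)); [|exact S0].
  intros; rewrite fterm_split; unfold zero_seq; req; ring.
- unfold fobj. apply is_series_unique.
  apply (is_series_ext (fun k => / (INR k + 1)^2 / 2)); [|exact S0].
  intros; rewrite fterm_split; unfold zero_seq; req; ring.
- intros y [N H].
  set (Q := sum_n (fun k => (INR k + 1) ^ 2 / 2 * opA y k ^ 2) (S N)).
  assert (E : forall t, (fobj (opA (fun k => t * y k)) - fobj (opA zero_seq)) / t = t * Q).
  { intros t. rewrite F0.
    assert (Ht : forall k, (N <= k)%nat -> t * y k = 0) by (intros; rewrite H by auto; ring).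
    rewrite (fobjA _ N Ht).
    rewrite (sum_n_ext _ (fun k => t^2 * ((INR k + 1) ^ 2 / 2 * opA y k ^ 2) + 0 * 0)).
    2:{ intros k; destruct k; simpl; ring. }
    rewrite (sum_lin _ (fun _ => 0)). fold Q.
    destruct (Req_dec t 0) as [->|Ht0]. unfold Rdiv. rewrite Rinv_0. ring.
    field. auto. }
  apply (filterlim_ext (fun t => t * Q)). { intros; symmetry; apply E. }
  apply (filterlim_filter_le_1 (F := locally 0)).
  { intros P HP. unfold at_right, within. apply (filter_imp P); auto. }
  replace 0 with (0 * Q) at 2 by ring.
  apply (@ex_derive_continuous R_AbsRing R_NormedModule (fun t => t * Q)).
  auto_derive. easy.
Qed.
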